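(* Let $n\in\mathbb{N}$ and let $\mathcal{A}_n$ be a Sperner family of subsets of $[1,n]_{\mathbb{Z}}$. For $0\le k\le n$ let $a_k=|\{A\in\mathcal{A}_n: |A|=k\}|$. Then $$\sum_{k=0}^n\frac{a_k}{\binom{n}{k}}\le 4.$$
   Context: $[1,n]_{\mathbb{Z}}=\{1,\dots,n\}$. A collection $\mathcal{A}_n$ of subsets of $[1,n]_{\mathbb{Z}}$ is called a Sperner family if for each $A\in\mathcal{A}_n$ at least one of the following holds: (1) there exists $B_A\subset[1,n]_{\mathbb{Z}}\setminus A$ with $|B_A|\ge n/2$ such that every $A'\supset A$ with $A'\cap B_A\neq\emptyset$ satisfies $A'\notin\mathcal{A}_n$; (2) there exists $B'_A\subset A$ with $|B'_A|\ge n/2$ such that every $A'\subset A$ with $B'_A\setminus A'\ne\emptyset$ satisfies $A'\notin\mathcal{A}_n$. *)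

(* Defs.v *)
From mathcomp Require Import all_boot all_order all_algebra.
Set Implicit Arguments. Unset Strict Implicit. Unset Printing Implicit Defensive.
Import Order.TTheory GRing.Theory Num.Theory.

(* Ground set [1,n] is modelled by 'I_n (= {0,...,n-1}); |B| >= n/2 is 2*|B| >= n. *)
Definition sperner_family (n : nat) (F : {set {set 'I_n}}) : Prop :=
  forall A, A \in F ->
    (exists B : {set 'I_n}, [/\ B \subset ~: A, n <= 2 * #|B| &
        forall A' : {set 'I_n}, A \subset A' -> A' :&: B != set0 -> A' \notin F])
    \/
    (exists B' : {set 'I_n}, [/\ B' \subset A, n <= 2 * #|B'| &
        forall A' : {set 'I_n}, A' \subset A -> B' :\: A' != set0 -> A' \notin F]).

Definition level_count (n : nat) (F : {set {set 'I_n}}) (k : nat) : nat :=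
  #|[set A in F | #|A| == k]|.

(* Main.v *)
Require Import Defs.
From mathcomp Require Import all_boot all_order all_algebra.
From mathcomp Require Import fingroup perm zify.
Set Implicit Arguments. Unset Strict Implicit. Unset Printing Implicit Defensive.

Definition lowset n k : {set 'I_n} := [set i : 'I_n | i < k].
Definition pre n (s : {perm 'I_n}) k : {set 'I_n} := [set s i | i in lowset n k].

Lemma card_lowset n k : k <= n -> #|lowset n k| = k.
Proof.
elim: k => [|k IH] lt.
  apply/eqP; rewrite cards_eq0; apply/eqP/setP => i; by rewrite !inE.
have -> : lowset n k.+1 = Ordinal lt |: lowset n k.
  apply/setP => i; rewrite !inE ltnS leq_eqVlt; congr orb.
rewrite cardsU1 IH ?(ltnW lt) // inE ltnn; by [].
Qed.

Lemma mem_pre n (s : {perm 'I_n}) k x : (s x \in pre s k) = (x < k).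
Proof. by rewrite mem_imset ?inE //; exact: perm_inj. Qed.

Lemma card_pre n (s : {perm 'I_n}) k : k <= n -> #|pre s k| = k.
Proof. move=> kn; rewrite card_imset ?card_lowset //; exact: perm_inj. Qed.

Lemma pre_mono n (s : {perm 'I_n}) j k : j <= k -> pre s j \subset pre s k.
Proof.
move=> jk; apply: imsetS; apply/subsetP => x; rewrite !inE => h.
exact: leq_trans h jk.
Qed.

Lemma preM n (s g : {perm 'I_n}) k : pre (s * g)%g k = [set g x | x in pre s k].
Proof. rewrite /pre -imset_comp; apply: eq_imset => x; by rewrite permM. Qed.

Lemma card_le_mul n (X Y : {set {perm 'I_n}}) (g : {perm 'I_n}) :
  (forall s, s \in X -> (s * g)%g \in Y) -> #|X| <= #|Y|.
Proof.
move=> h; rewrite -(card_imset X (@mulIg _ g)).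
apply: subset_leq_card; apply/subsetP => y /imsetP [s sX ->]; exact: h.
Qed.

Lemma eq_card_setD (T : finType) (A A' : {set T}) : #|A| = #|A'| -> #|A' :\: A| = #|A :\: A'|.
Proof. by move=> h; rewrite !cardsD h setIC. Qed.

Lemma trans_base n (A A' : {set 'I_n}) : A :\: A' = set0 -> #|A| = #|A'| ->
  exists g : {perm 'I_n}, [set g x | x in A] = A'.
Proof.
move=> /eqP; rewrite setD_eq0 => sub hc; exists 1%g.
have -> : A = A' by apply/eqP; rewrite eqEcard sub hc leqnn.
rewrite -[RHS]imset_id; apply: eq_imset => x; by rewrite perm1.
Qed.

Lemma perm_trans n (A A' : {set 'I_n}) : #|A| = #|A'| ->
  exists g : {perm 'I_n}, [set g x | x in A] = A'.
Proof.
have: forall m A, #|A :\: A'| <= m -> #|A| = #|A'| ->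
   exists g : {perm 'I_n}, [set g x | x in A] = A'; last by apply; apply: leqnn.
move=> m; elim: m => [|m IH] B hm hc; case: (set_0Vmem (B :\: A')) => [e|[a ha]];
  try exact: trans_base.
  by move: hm; rewrite leqn0 cards_eq0 => /eqP e; rewrite e inE in ha.
have : 0 < #|A' :\: B| by rewrite eq_card_setD // card_gt0; apply/set0Pn; exists a.
rewrite card_gt0 => /set0Pn [a' ha'].
move: ha ha'; rewrite !inE => /andP [naA' aB] /andP [na'B a'A'].
set t := tperm a a'.
set B1 := [set t x | x in B].
have memB1 x : (x \in B1) = (t x \in B).
  by rewrite -{1}(tpermK a a' x) mem_imset //; exact: perm_inj.
have eD : B1 :\: A' = (B :\: A') :\ a.
  apply/setP => x; rewrite !inE memB1 /t.
  case: tpermP => [->|->|/eqP xa /eqP xa'].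
  - by rewrite eqxx (negbTE na'B) andbF.
  - by rewrite a'A' /= !andbF.
  - by rewrite xa.
have hc1 : #|B1| = #|A'| by rewrite card_imset //; exact: perm_inj.
have hm1 : #|B1 :\: A'| <= m.
  move: hm; rewrite eD (cardsD1 a (B :\: A')) !inE naA' aB /= add1n ltnS.
  by [].
have [g1 hg1] := IH B1 hm1 hc1.
exists (t * g1)%g; rewrite -hg1 /B1 -imset_comp; apply: eq_imset => x.
by rewrite permM.
Qed.

Definition Nset n (A : {set 'I_n}) := [set s : {perm 'I_n} | pre s #|A| == A].

Lemma N_le n (A A' : {set 'I_n}) : #|A| = #|A'| -> #|Nset A| <= #|Nset A'|.
Proof.
move=> hc; have [g hg] := perm_trans hc.
apply: (@card_le_mul _ _ _ g) => s; rewrite !inE -hc preM => /eqP ->.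
by rewrite hg.
Qed.

Lemma N_const n (A A' : {set 'I_n}) : #|A| = #|A'| -> #|Nset A| = #|Nset A'|.
Proof. by move=> h; apply/eqP; rewrite eqn_leq !N_le. Qed.

Lemma card_setI_le n (A : {set 'I_n}) : #|A| <= n.
Proof. by rewrite -[X in _ <= X]card_ord max_card. Qed.

Lemma N_count n (A : {set 'I_n}) : #|Nset A| * 'C(n, #|A|) = n`!.
Proof.
set k := #|A|.
have kn : k <= n by apply: card_setI_le.
have e1 : n`! = \sum_(s : {perm 'I_n}) 1 by rewrite sum1_card card_Sn.
rewrite e1 (partition_big (fun s => pre s k) (fun B : {set 'I_n} => #|B| == k)); last first.
  by move=> s _; rewrite card_pre.
transitivity (\sum_(B : {set 'I_n} | #|B| == k) #|Nset A|).
  rewrite sum_nat_const mulnC; congr (_ * _); rewrite -[X in 'C(X, _)](card_ord n) -card_draws.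
  apply: eq_card => B; by rewrite inE.
apply: eq_bigr => B /eqP hB.
rewrite (@N_const n A B (esym hB)) -sum1_card /Nset hB; apply: eq_bigl => s.
by rewrite inE.
Qed.

Lemma slice_sum n k (A Y : {set 'I_n}) (i0 : 'I_n) :
  #|[set s : {perm 'I_n} | (pre s k == A) && (s i0 \in Y)]| =
  \sum_(b in Y) #|[set s : {perm 'I_n} | (pre s k == A) && (s i0 == b)]|.
Proof.
rewrite -sum1_card (partition_big (fun s : {perm 'I_n} => s i0) (mem Y)); last first.
  by move=> s; rewrite inE => /andP [].
apply: eq_bigr => b hb; rewrite -sum1_card; apply: eq_bigl => s.
rewrite !inE; case: (s i0 =P b) => [->|]; rewrite ?andbT ?andbF //; move: hb; rewrite inE => ->; by rewrite andbT.
Qed.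

Lemma slice n k (A D X : {set 'I_n}) (i0 : 'I_n) :
  (forall s : {perm 'I_n}, pre s k = A -> s i0 \in D) ->
  (forall b b', b \in D -> b' \in D -> [set tperm b b' x | x in A] = A) ->
  X \subset D ->
  #|[set s : {perm 'I_n} | (pre s k == A) && (s i0 \in X)]| * #|D| =
  #|X| * #|[set s : {perm 'I_n} | pre s k == A]|.
Proof.
move=> hD ht hX.
set M := fun b => #|[set s : {perm 'I_n} | (pre s k == A) && (s i0 == b)]|.
have Mle b b' : b \in D -> b' \in D -> M b <= M b'.
  move=> hb hb'; apply: (@card_le_mul _ _ _ (tperm b b')) => s.
  rewrite !inE preM permM => /andP [/eqP -> /eqP ->].
  by rewrite ht // tpermL !eqxx.
have eAD : [set s : {perm 'I_n} | pre s k == A] =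
           [set s : {perm 'I_n} | (pre s k == A) && (s i0 \in D)].
  apply/setP => s; rewrite !inE; case: (pre s k =P A) => //= /hD ->; by [].
rewrite eAD !slice_sum.
case: (set_0Vmem D) => [e|[d hd]].
  have -> : X = set0 by apply/eqP; rewrite -subset0 -e.
  by rewrite e !big_set0 cards0.
have Mc b : b \in D -> M b = M d by move=> hb; apply/eqP; rewrite eqn_leq !Mle.
rewrite (eq_bigr (fun _ => M d)); last by move=> b hb; apply: Mc; exact: (subsetP hX).
rewrite (eq_bigr (fun _ => M d) Mc) !sum_nat_const.
by rewrite mulnAC mulnA.
Qed.

Definition up n (F : {set {set 'I_n}}) (s : {perm 'I_n}) k :=
  [forall j : 'I_n.+1, (k < j) ==> (pre s j \notin F)].
Definition down n (F : {set {set 'I_n}}) (s : {perm 'I_n}) k :=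
  [forall j : 'I_n.+1, (j < k) ==> (pre s j \notin F)].
Definition Oset n (F : {set {set 'I_n}}) (A : {set 'I_n}) :=
  [set s : {perm 'I_n} | (pre s #|A| == A) && (up F s #|A| || down F s #|A|)].

Lemma lower n (F : {set {set 'I_n}}) A : sperner_family F -> A \in F ->
  #|Nset A| <= 2 * #|Oset F A|.
Proof.
move=> hS hA; set k := #|A|.
have kn : k <= n by apply: card_setI_le.
case: (hS A hA) => [[B [hB hn hF]] | [B [hB hn hF]]].
- case: (ltnP k n) => kn'; last first.
    have : #|Nset A| <= #|Oset F A|.
      apply: subset_leq_card; apply/subsetP => s; rewrite !inE => ->; rewrite /=.
      apply/orP; left; apply/forallP => j; apply/implyP => kj.
      have := ltn_ord j; rewrite ltnS => jn.
      have := leq_trans kj (leq_trans jn kn'); by rewrite ltnn.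
    lia.
  pose i0 := Ordinal kn'.
  have := @slice n k A (~: A) B i0.
  set S := [set s : {perm 'I_n} | _].
  move=> hsl.
  have h1 : forall s : {perm 'I_n}, pre s k = A -> s i0 \in ~: A.
    by move=> s es; rewrite in_setC -es mem_pre ltnn.
  have h2 : forall b b', b \in ~: A -> b' \in ~: A -> [set tperm b b' x | x in A] = A.
    move=> b b' hb hb'; rewrite -[RHS]imset_id; apply: eq_in_imset => x xA.
    move: hb hb'; rewrite !inE => hb hb'.
    by apply: tpermD; apply/eqP => ex; [move: hb | move: hb']; rewrite ex xA.
  have e := hsl h1 h2 hB.
  have hSO : #|S| <= #|Oset F A|.
    apply: subset_leq_card; apply/subsetP => s; rewrite !inE => /andP [/eqP hs hsB].
    rewrite hs eqxx /=; apply/orP; left; apply/forallP => j; apply/implyP => kj.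
    apply: hF.
      by rewrite -hs; apply: pre_mono; apply: ltnW.
    apply/set0Pn; exists (s i0); by rewrite inE mem_pre hsB andbT.
  have cC : #|~: A| = n - k by rewrite cardsCs setCK card_ord.
  rewrite cC in e.
  have : 0 < n - k by rewrite subn_gt0.
  have : n - k <= n by apply: leq_subr.
  move: e hSO hn; rewrite /Nset -/k.
  set N := #|[set s : {perm 'I_n} | _]|.
  move: (n - k) => d; nia.
- case: (posnP k) => k0.
    have : #|Nset A| <= #|Oset F A|.
      apply: subset_leq_card; apply/subsetP => s; rewrite !inE => ->; rewrite /=.
      apply/orP; right; apply/forallP => j; apply/implyP.
      by rewrite -/k k0.
    lia.
  have kn' : k.-1 < n by rewrite prednK.
  pose i0 := Ordinal kn'.
  have := @slice n k A A B i0.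
  set S := [set s : {perm 'I_n} | _].
  move=> hsl.
  have h1 : forall s : {perm 'I_n}, pre s k = A -> s i0 \in A.
    by move=> s es; rewrite -es mem_pre /= prednK.
  have h2 : forall b b', b \in A -> b' \in A -> [set tperm b b' x | x in A] = A.
    move=> b b' hb hb'; apply/eqP; rewrite eqEcard card_imset; last exact: perm_inj.
    rewrite leqnn andbT; apply/subsetP => y /imsetP [x xA ->].
    by case: tpermP.
  have e := hsl h1 h2 hB.
  have hSO : #|S| <= #|Oset F A|.
    apply: subset_leq_card; apply/subsetP => s; rewrite !inE => /andP [/eqP hs hsB].
    rewrite hs eqxx /=; apply/orP; right; apply/forallP => j; apply/implyP => jk.
    apply: hF.
      by rewrite -hs; apply: pre_mono; apply: ltnW.
    apply/set0Pn; exists (s i0); rewrite inE mem_pre hsB andbT /= -ltnNge.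
    by rewrite -ltnS prednK.
  move: e hSO hn k0 kn; rewrite /Nset -/k. nia.
Qed.

Lemma card_sumb (T : finType) (X : {set T}) : #|X| = \sum_(x : T) (x \in X).
Proof. by rewrite -sum1_card big_mkcond; apply: eq_bigr => x _; case: (x \in X). Qed.

Lemma le1_up n (F : {set {set 'I_n}}) (s : {perm 'I_n}) (b : bool) :
  #|[set A in F | (pre s #|A| == A) && (if b then up F s #|A| else down F s #|A|)]| <= 1.
Proof.
apply/card_le1_eqP => A1 A2; rewrite !inE => /and3P [F1 /eqP e1 u1] /and3P [F2 /eqP e2 u2].
have l1 := card_setI_le A1; have l2 := card_setI_le A2.
case: (ltngtP #|A1| #|A2|) => h; last by rewrite -e1 -e2 h.
- case: b u1 u2 => u1 u2.
    move/forallP: u1 => /(_ (inord #|A2|)); rewrite inordK ?ltnS // h /= e2 F2; by [].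
  move/forallP: u2 => /(_ (inord #|A1|)); rewrite inordK ?ltnS // h /= e1 F1; by [].
- case: b u1 u2 => u1 u2.
    move/forallP: u2 => /(_ (inord #|A1|)); rewrite inordK ?ltnS // h /= e1 F1; by [].
  move/forallP: u1 => /(_ (inord #|A2|)); rewrite inordK ?ltnS // h /= e2 F2; by [].
Qed.

Lemma per_s n (F : {set {set 'I_n}}) (s : {perm 'I_n}) :
  #|[set A in F | s \in Oset F A]| <= 2.
Proof.
apply: (leq_trans _ (leq_add (le1_up F s true) (le1_up F s false))).
apply: (leq_trans _ (leq_card_setU _ _)).
apply: subset_leq_card; apply/subsetP => A; rewrite !inE.
by case/andP => -> /andP [-> /orP [] ->]; rewrite ?orbT.
Qed.

Lemma upper n (F : {set {set 'I_n}}) :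
  \sum_(A in F) #|Oset F A| <= 2 * n`!.
Proof.
rewrite (eq_bigr (fun A => \sum_(s : {perm 'I_n}) (s \in Oset F A))); last first.
  by move=> A _; rewrite card_sumb.
rewrite exchange_big /=.
rewrite -card_Sn -sum1_card big_distrr /= leq_sum // => s _.
rewrite muln1 (leq_trans _ (per_s F s)) // card_sumb leq_eqVlt; apply/orP; left.
rewrite big_mkcond /=; apply/eqP; apply: eq_bigr => A _; rewrite !inE.
by case: (A \in F).
Qed.

Import Order.TTheory GRing.Theory Num.Theory.
Local Open Scope ring_scope.

Lemma ratio n (A : {set 'I_n}) :
  (#|Nset A|)%:R / (n`!)%:R = ((('C(n, #|A|))%:R)^-1 : rat).
Proof.
have e := N_count A.
have N0 : (#|Nset A|)%:R != 0 :> rat.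
  rewrite pnatr_eq0 -lt0n; move: (fact_gt0 n); rewrite -e muln_gt0; by case/andP.
by rewrite -e natrM invfM mulrA mulfV ?mul1r.
Qed.

Unset Implicit Arguments.

Theorem lemma2p3 (n : nat) (F : {set {set 'I_n}}) :
  sperner_family F ->
  \sum_(k < n.+1) (level_count F k)%:R / ('C(n, k))%:R <= (4 : rat).
Proof.
move=> hS.
have e1 : \sum_(k < n.+1) (level_count F k)%:R / ('C(n, k))%:R =
          \sum_(A in F) ((#|Nset A|)%:R / (n`!)%:R : rat).
  rewrite (partition_big (fun A : {set 'I_n} => (inord #|A| : 'I_n.+1)) xpredT) //=.
  apply: eq_bigr => k _.
  rewrite /level_count -sum1_card natr_sum mulr_suml.
  have hA : forall A : {set 'I_n}, (#|A| < n.+1)%N by move=> A; rewrite ltnS card_setI_le.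
  apply: eq_big => [A|A].
    by rewrite !inE -val_eqE /= inordK.
  rewrite !inE => /andP [_ /eqP hk].
  by rewrite ratio mul1r -hk.
rewrite e1 -mulr_suml -natr_sum ler_pdivrMr ?ltr0n ?fact_gt0 //.
rewrite -natrM ler_nat.
apply: (@leq_trans (\sum_(A in F) 2 * #|Oset F A|)%N); first exact: leq_sum (fun A hA => lower hS hA).
rewrite -big_distrr /= -[4%N]/(2 * 2)%N -mulnA leq_mul2l /=.
exact: upper.
Qed.
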